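(* Let $\Sigma$ be a set of sp-implications such that every $\sigma\to\tau$ in $\Sigma$ satisfies: (i) every variable occurring in $\tau$ occurs in $\sigma$ exactly once; (ii) $|W_\tau|\ge 2$ and every point of every $\mathfrak v_\tau(p)$ is a leaf of $\mathfrak T_\tau$; (iii) $\mathfrak v_\tau(p)\cap\mathfrak v_\tau(q)=\emptyset$ whenever $p\neq q$. Then the spi-logic $\mathsf{SPi}+\Sigma$ is complex, and hence complete.
   Context: Fix a non-empty signature $\mathcal{R}$. Sp-formulas are built from propositional variables and $\top$ using $\wedge$ and unary diamonds $\Diamond_R$ ($R\in\mathcal R$); an sp-implication is $\sigma\to\tau$ with $\sigma,\tau$ sp-formulas. A SLO is an algebra $(A,\wedge,\top,\Diamond_R)_{R\in\mathcal R}$ where $(A,\wedge,\top)$ is a meet-semilattice with top $\top$ and each $\Diamond_R$ is monotone; it validates $\sigma\to\tau$ if $\sigma[\mathfrak a]\le\tau[\mathfrak a]$ for all valuations $\mathfrak a$. Frames $\mathfrak F=(W,R^{\mathfrak F})_{R\in\mathcal R}$ and validity of sp-implications in frames are as in standard Kripke semantics. $\Sigma\models_{\mathsf{Kr}}\iota$ (resp. $\Sigma\models_{\mathsf{SLO}}\iota$) means $\iota$ is valid in every frame (resp. SLO) validating $\Sigma$. The spi-logic $\mathsf{SPi}+\Sigma$ is $\{\iota\mid\Sigma\models_{\mathsf{SLO}}\iota\}$; it is complete if $\Sigma\models_{\mathsf{Kr}}\iota\iff\Sigma\models_{\mathsf{SLO}}\iota$ for all sp-implications $\iota$. For a frame $\mathfrak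 F$, $\mathfrak F^\star=(2^W,\cap,W,\Diamond^+_R)_R$ with $\Diamond_R^+X=\{w\mid\exists v\in X,(w,v)\in R^{\mathfrak F}\}$. A spi-logic $L$ is complex if every SLO validating $L$ embeds (injectively, preserving $\wedge,\top,\Diamond_R$) into $\mathfrak F^\star$ for some frame $\mathfrak F$ validating $L$. The tree model $\mathfrak M_\varrho=(\mathfrak T_\varrho,\mathfrak v_\varrho)$ of an sp-formula $\varrho$, with $\mathfrak T_\varrho=(W_\varrho,R_\varrho)_{R\in\mathcal R}$ a finite tree with root $r_\varrho$, is defined inductively: for $\varrho=\top$ it is a single irreflexive point with all variables false; for $\varrho=p$ a single irreflexive point $r_\varrho$ with $\mathfrak v_\varrho(p)=\{r_\varrho\}$ and all other variables false; for $\varrho=\varrho_1\wedge\varrho_2$ take disjoint $\mathfrak M_{\varrho_1},\mathfrak M_{\varrho_2}$ and merge their roots into $r_\varrho$, which satisfies a variable iff one of the merged roots did; for $\varrho=\Diamond_R\varrho'$ add a fresh point $r_\varrho$ to $\mathfrak M_{\varrho'}$ with a single new $R$-edge from $r_\varrho$ to $r_{\varrho'}$, valuation unchanged. A leaf is a point with no successor. *)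

(* Defs.v *)
From Stdlib Require Import Arith.

Set Implicit Arguments.

(* Propositional variables are natural numbers; Rel is the signature. *)
Inductive spf (Rel : Type) : Type :=
  | Var : nat -> spf Rel
  | Top : spf Rel
  | And : spf Rel -> spf Rel -> spf Rel
  | Dia : Rel -> spf Rel -> spf Rel.
Arguments Top {Rel}.
Arguments Var {Rel} _.

Definition spimp (Rel : Type) : Type := (spf Rel * spf Rel)%type.

Fixpoint occ (Rel : Type) (p : nat) (f : spf Rel) : nat :=
  match f with
  | Var q => if Nat.eqb p q then 1 else 0
  | Top => 0
  | And a b => occ p a + occ p b
  | Dia _ a => occ p a
  end.

Record SLO (Rel : Type) : Type := {
  car :> Type;
  meet : car -> car -> car;
  top : car;
  dia : Rel -> car -> car;
  meetA : forall x y z, meet x (meet y z) = meet (meet x y) z;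
  meetC : forall x y, meet x y = meet y x;
  meetI : forall x, meet x x = x;
  meetT : forall x, meet x top = x;
  dia_mono : forall r x y, meet x y = x -> meet (dia r x) (dia r y) = dia r x
}.

Definition sle (Rel : Type) (A : SLO Rel) (x y : A) : Prop := meet A x y = x.

Fixpoint sevl (Rel : Type) (A : SLO Rel) (a : nat -> A) (f : spf Rel) : A :=
  match f with
  | Var p => a p
  | Top => top A
  | And f1 f2 => meet A (sevl A a f1) (sevl A a f2)
  | Dia r f1 => dia A r (sevl A a f1)
  end.

Definition slo_valid (Rel : Type) (A : SLO Rel) (i : spimp Rel) : Prop :=
  forall a : nat -> A, sle A (sevl A a (fst i)) (sevl A a (snd i)).

Record frame (Rel : Type) : Type := {
  world : Type;
  facc : Rel -> world -> world -> Prop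
}.

Fixpoint ktrue (Rel : Type) (F : frame Rel) (V : nat -> world F -> Prop)
    (f : spf Rel) (w : world F) : Prop :=
  match f with
  | Var p => V p w
  | Top => True
  | And f1 f2 => ktrue F V f1 w /\ ktrue F V f2 w
  | Dia r f1 => exists v, facc F r w v /\ ktrue F V f1 v
  end.

Definition frame_valid (Rel : Type) (F : frame Rel) (i : spimp Rel) : Prop :=
  forall (V : nat -> world F -> Prop) (w : world F),
    ktrue F V (fst i) w -> ktrue F V (snd i) w.

Definition cons_Kr (Rel : Type) (Sigma : spimp Rel -> Prop) (i : spimp Rel) : Prop :=
  forall F : frame Rel, (forall j, Sigma j -> frame_valid F j) -> frame_valid F i.

Definition cons_SLO (Rel : Type) (Sigma : spimp Rel -> Prop) (i : spimp Rel) : Prop :=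
  forall A : SLO Rel, (forall j, Sigma j -> slo_valid A j) -> slo_valid A i.

Definition spi_logic (Rel : Type) (Sigma : spimp Rel -> Prop) : spimp Rel -> Prop :=
  fun i => cons_SLO Sigma i.

Definition spi_complete (Rel : Type) (Sigma : spimp Rel -> Prop) : Prop :=
  forall i, cons_Kr Sigma i <-> cons_SLO Sigma i.

(* embedding of an SLO into the complex algebra F^star = (2^W, cap, W, Dia^+) *)
Definition embeds_into_complex (Rel : Type) (A : SLO Rel) (F : frame Rel) : Prop :=
  exists f : A -> (world F -> Prop),
    (forall x y, (forall w, f x w <-> f y w) -> x = y) /\
    (forall x y w, f (meet A x y) w <-> (f x w /\ f y w)) /\
    (forall w, f (top A) w <-> True) /\
    (forall r x w, f (dia A r x) w <-> exists v, facc F r w v /\ f x v).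

Definition complex (Rel : Type) (L : spimp Rel -> Prop) : Prop :=
  forall A : SLO Rel, (forall i, L i -> slo_valid A i) ->
    exists F : frame Rel, (forall i, L i -> frame_valid F i) /\ embeds_into_complex A F.

(* non-root points of T_rho *)
Fixpoint nr (Rel : Type) (f : spf Rel) : Type :=
  match f with
  | Var _ => Empty_set
  | Top => Empty_set
  | And a b => (nr a + nr b)%type
  | Dia _ a => option (nr a)   (* None = root of the subtree *)
  end.

(* points of T_rho; None is the root r_rho *)
Definition tpt (Rel : Type) (f : spf Rel) : Type := option (nr f).

Definition emb_l (Rel : Type) (a b : spf Rel) (w : tpt a) : tpt (And a b) :=
  match w with None => None | Some x => Some (inl x) end.
Definition emb_r (Rel : Type) (a b : spf Rel) (w : tpt b) : tpt (And a b) :=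
  match w with None => None | Some x => Some (inr x) end.
Definition emb_d (Rel : Type) (r : Rel) (a : spf Rel) (w : tpt a) : tpt (Dia r a) :=
  Some w.

Fixpoint tacc {Rel : Type} (f : spf Rel) : Rel -> tpt f -> tpt f -> Prop :=
  match f return Rel -> tpt f -> tpt f -> Prop with
  | Var _ => fun _ _ _ => False
  | Top => fun _ _ _ => False
  | And a b => fun r u v =>
      (exists u' v', u = emb_l b u' /\ v = emb_l b v' /\ @tacc _ a r u' v') \/
      (exists u' v', u = emb_r a u' /\ v = emb_r a v' /\ @tacc _ b r u' v')
  | Dia r0 a => fun r u v =>
      (u = None /\ v = @emb_d _ r0 a None /\ r = r0) \/
      (exists u' v', u = @emb_d _ r0 a u' /\ v = @emb_d _ r0 a v' /\ @tacc _ a r u' v')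
  end.

Arguments tacc {Rel} f _ _ _.

Fixpoint tval {Rel : Type} (f : spf Rel) : nat -> tpt f -> Prop :=
  match f return nat -> tpt f -> Prop with
  | Var q => fun p u => p = q /\ u = None
  | Top => fun _ _ => False
  | And a b => fun p u =>
      (exists u', u = emb_l b u' /\ @tval _ a p u') \/
      (exists u', u = emb_r a u' /\ @tval _ b p u')
  | Dia r0 a => fun p u => exists u', u = @emb_d _ r0 a u' /\ @tval _ a p u'
  end.

Arguments tval {Rel} f _ _.

Definition tleaf (Rel : Type) (f : spf Rel) (w : tpt f) : Prop :=
  forall (r : Rel) (v : tpt f), ~ tacc f r w v.

Definition cond6p1 (Rel : Type) (i : spimp Rel) : Prop :=
  let sigma := fst i in let tau := snd i in
  (forall p, 0 < occ p tau -> occ p sigma = 1) /\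
  (exists w1 w2 : tpt tau, w1 <> w2) /\
  (forall p w, tval tau p w -> @tleaf Rel tau w) /\
  (forall p q w, p <> q -> ~ (tval tau p w /\ tval tau q w)).

(* Main.v *)
Require Import Defs.
From Stdlib Require Import Arith Lia Classical FunctionalExtensionality PropExtensionality.
Set Implicit Arguments.

Section Alg.
Variable Rel : Type.
Variable A : SLO Rel.

Lemma le_refl (x : A) : sle A x x.
Proof. apply meetI. Qed.

Lemma le_trans (x y z : A) : sle A x y -> sle A y z -> sle A x z.
Proof.
  unfold sle; intros H1 H2. rewrite <- H1, <- meetA, H2. reflexivity.
Qed.

Lemma le_antisym (x y : A) : sle A x y -> sle A y x -> x = y.
Proof. unfold sle; intros H1 H2. rewrite <- H1, meetC. exact H2. Qed.

Lemma meet_l (x y : A) : sle A (meet A x y) x.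
Proof. unfold sle. rewrite (meetC A (meet A x y) x), meetA, meetI. reflexivity. Qed.

Lemma meet_r (x y : A) : sle A (meet A x y) y.
Proof. unfold sle. rewrite <- meetA, meetI. reflexivity. Qed.

Lemma meet_glb (c x y : A) : sle A c x -> sle A c y -> sle A c (meet A x y).
Proof. unfold sle; intros H1 H2. rewrite meetA, H1, H2. reflexivity. Qed.

Lemma le_top (x : A) : sle A x (top A).
Proof. apply meetT. Qed.

Lemma sevl_mono (phi : spf Rel) : forall a1 a2 : nat -> A,
  (forall p, 0 < occ p phi -> sle A (a1 p) (a2 p)) ->
  sle A (sevl A a1 phi) (sevl A a2 phi).
Proof.
  induction phi as [q| |f1 IH1 f2 IH2|r f IH]; intros a1 a2 H; simpl.
  - apply H. simpl. rewrite Nat.eqb_refl. lia.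
  - apply le_refl.
  - apply meet_glb.
    + eapply le_trans; [apply meet_l|]. apply IH1. intros p Hp; apply H; simpl; lia.
    + eapply le_trans; [apply meet_r|]. apply IH2. intros p Hp; apply H; simpl; lia.
  - apply dia_mono. apply IH. intros p Hp; apply H; simpl; lia.
Qed.

Definition FA : frame Rel := {| world := car A; facc := fun r c d => sle A c (dia A r d) |}.

Lemma extract (V : nat -> world FA -> Prop) (phi : spf Rel) : forall w : A,
  ktrue FA V phi w -> exists a : nat -> A, sle A w (sevl A a phi) /\
     (forall p, occ p phi = 1 -> V p (a p)).
Proof.
  induction phi as [q| |f1 IH1 f2 IH2|r f IH]; intros w Hw; simpl in Hw.
  - exists (fun _ => w). split; [apply le_refl|].
    intros p; simpl. destruct (Nat.eqb_spec p q); [subst; auto|discriminate].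
  - exists (fun _ => top A). split; [apply le_top|]. simpl; discriminate.
  - destruct Hw as [H1 H2]. destruct (IH1 _ H1) as [a1 [L1 V1]].
    destruct (IH2 _ H2) as [a2 [L2 V2]].
    exists (fun p => if Nat.eqb (occ p f2) 0 then a1 p
                     else if Nat.eqb (occ p f1) 0 then a2 p else top A).
    split.
    + simpl. apply meet_glb.
      * eapply le_trans; [exact L1|]. apply sevl_mono. intros p Hp.
        destruct (Nat.eqb_spec (occ p f2) 0); [apply le_refl|].
        destruct (Nat.eqb_spec (occ p f1) 0); [lia|apply le_top].
      * eapply le_trans; [exact L2|]. apply sevl_mono. intros p Hp.
        destruct (Nat.eqb_spec (occ p f2) 0); [lia|].
        destruct (Nat.eqb_spec (occ p f1) 0); [apply le_refl|apply le_top].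
    + intros p Hp; simpl in Hp.
      destruct (Nat.eqb_spec (occ p f2) 0).
      * apply V1; lia.
      * destruct (Nat.eqb_spec (occ p f1) 0); [apply V2; lia|lia].
  - destruct Hw as [v [Hr Hv]]. destruct (IH _ Hv) as [a [L Va]].
    exists a. split; [|exact Va]. simpl.
    eapply le_trans; [exact Hr|]. apply dia_mono. exact L.
Qed.
End Alg.

Section Syn.
Variable Rel : Type.

Fixpoint NV (f : spf Rel) : Prop :=
  match f with
  | Var _ => False | Top => True | And a b => NV a /\ NV b | Dia _ _ => True end.

Fixpoint PL (p : nat) (f : spf Rel) : Prop :=
  match f with
  | Var q => q = p | Top => True | And a b => PL p a /\ PL p b | Dia _ _ => False end.

Fixpoint Good (f : spf Rel) : Prop :=
  match f with
  | Var _ => True | Top => True | And a b => Good a /\ Good b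
  | Dia _ g => Good g /\ (NV g \/ exists p, PL p g) end.

Lemma PL_top (A : SLO Rel) (a : nat -> A) p f :
  PL p f -> occ p f = 0 -> sevl A a f = top A.
Proof.
  induction f as [q| |f1 IH1 f2 IH2|r g IH]; simpl; intros H1 H2.
  - subst. rewrite Nat.eqb_refl in H2. discriminate.
  - reflexivity.
  - destruct H1. rewrite IH1, IH2 by (auto; lia). apply meetT.
  - contradiction.
Qed.

Lemma PL_val (A : SLO Rel) (a : nat -> A) p f :
  PL p f -> 0 < occ p f -> sevl A a f = a p.
Proof.
  induction f as [q| |f1 IH1 f2 IH2|r g IH]; simpl; intros H1 H2.
  - subst. reflexivity.
  - lia.
  - destruct H1 as [P1 P2].
    destruct (Nat.eq_dec (occ p f1) 0) as [E1|E1];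
    destruct (Nat.eq_dec (occ p f2) 0) as [E2|E2].
    + lia.
    + rewrite (PL_top A a p f1 P1 E1), IH2 by (auto; lia). rewrite meetC. apply meetT.
    + rewrite (PL_top A a p f2 P2 E2), IH1 by (auto; lia). apply meetT.
    + rewrite IH1, IH2 by (auto; lia). apply meetI.
  - contradiction.
Qed.

Lemma PL_true (F : frame Rel) V p f x : PL p f -> V p x -> ktrue F V f x.
Proof.
  induction f as [q| |f1 IH1 f2 IH2|r g IH]; simpl; intros H1 H2.
  - subst; auto.
  - auto.
  - destruct H1; auto.
  - contradiction.
Qed.

Lemma PL_true0 (F : frame Rel) V p f x : PL p f -> occ p f = 0 -> ktrue F V f x.
Proof.
  induction f as [q| |f1 IH1 f2 IH2|r g IH]; simpl; intros H1 H2.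
  - subst. rewrite Nat.eqb_refl in H2. discriminate.
  - auto.
  - destruct H1; split; [apply IH1|apply IH2]; auto; lia.
  - contradiction.
Qed.

Lemma main_lemma (A : SLO Rel) (V : nat -> world (FA A) -> Prop) (a : nat -> A) f :
  Good f -> (forall p, 0 < occ p f -> V p (a p)) -> NV f ->
  forall c, sle A c (sevl A a f) -> ktrue (FA A) V f c.
Proof.
  induction f as [q| |f1 IH1 f2 IH2|r g IH]; simpl; intros HG HV HN c Hc.
  - contradiction.
  - auto.
  - destruct HG, HN. split.
    + apply IH1; auto. intros p Hp; apply HV; lia.
      eapply le_trans; [exact Hc|apply meet_l].
    + apply IH2; auto. intros p Hp; apply HV; lia.
      eapply le_trans; [exact Hc|apply meet_r].
  - destruct HG as [HG [HN'|[p Hp]]]; exists (sevl A a g); split; simpl; auto.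
    + apply IH; auto. apply le_refl.
    + destruct (Nat.eq_dec (occ p g) 0) as [E|E].
      * eapply PL_true0; eauto.
      * rewrite (PL_val A a p g Hp) by lia. eapply PL_true; eauto. apply HV; lia.
Qed.

End Syn.

Section Tree.
Variable Rel : Type.

Lemma root_succ (f : spf Rel) : forall x : nr f, exists r v, tacc f r None v.
Proof.
  induction f as [q| |f1 IH1 f2 IH2|r0 g IH]; simpl; intros x.
  - destruct x.
  - destruct x.
  - destruct x as [x|x].
    + destruct (IH1 x) as [r [v H]]. exists r, (emb_l f2 v). left. exists None, v. auto.
    + destruct (IH2 x) as [r [v H]]. exists r, (emb_r f1 v). right. exists None, v. auto.
  - exists r0, (Some None). left. auto.
Qed.

Lemma notval_NV (f : spf Rel) : (forall p, ~ tval f p None) -> NV f.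
Proof.
  induction f as [q| |f1 IH1 f2 IH2|r0 g IH]; simpl; intros H; auto.
  - apply (H q). auto.
  - split.
    + apply IH1. intros p Hp. apply (H p). left. exists None. auto.
    + apply IH2. intros p Hp. apply (H p). right. exists None. auto.
Qed.

Lemma leaf_PL (f : spf Rel) p : @tleaf Rel f None -> (forall q, q <> p -> ~ tval f q None) -> PL p f.
Proof.
  unfold tleaf.
  induction f as [q| |f1 IH1 f2 IH2|r0 g IH]; simpl; intros HL HV; auto.
  - destruct (Nat.eq_dec q p); auto. exfalso. apply (HV q n). simpl. auto.
  - split.
    + apply IH1.
      * intros r v Hv. apply (HL r (emb_l f2 v)). left. exists None, v. auto.
      * intros q Hq Hv. apply (HV q Hq). left. exists None. auto.
    + apply IH2.
      * intros r v Hv. apply (HL r (emb_r f1 v)). right. exists None, v. auto.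
      * intros q Hq Hv. apply (HV q Hq). right. exists None. auto.
  - apply (HL r0 (Some None)). left. auto.
Qed.

Definition Cond (f : spf Rel) : Prop :=
  (forall p w, tval f p w -> @tleaf Rel f w) /\
  (forall p q w, p <> q -> ~ (tval f p w /\ tval f q w)).

Lemma Cond_l f1 f2 : Cond (And f1 f2) -> Cond f1.
Proof.
  intros [HL HD]. split.
  - intros p w Hw r v Hv. refine (HL p (emb_l f2 w) _ r (emb_l f2 v) _).
    + left. exists w. auto.
    + left. exists w, v. auto.
  - intros p q w Hpq [H1 H2]. apply (HD p q (emb_l f2 w) Hpq). split; left; exists w; auto.
Qed.

Lemma Cond_r f1 f2 : Cond (And f1 f2) -> Cond f2.
Proof.
  intros [HL HD]. split.
  - intros p w Hw r v Hv. refine (HL p (emb_r f1 w) _ r (emb_r f1 v) _).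
    + right. exists w. auto.
    + right. exists w, v. auto.
  - intros p q w Hpq [H1 H2]. apply (HD p q (emb_r f1 w) Hpq). split; right; exists w; auto.
Qed.

Lemma Cond_d r0 g : Cond (Dia r0 g) -> Cond g.
Proof.
  intros [HL HD]. split.
  - intros p w Hw r v Hv. refine (HL p (@emb_d Rel r0 g w) _ r (@emb_d Rel r0 g v) _).
    + exists w. auto.
    + right. exists w, v. auto.
  - intros p q w Hpq [H1 H2]. apply (HD p q (@emb_d Rel r0 g w) Hpq). split; exists w; auto.
Qed.

Lemma Cond_Good f : Cond f -> Good f.
Proof.
  induction f as [q| |f1 IH1 f2 IH2|r0 g IH]; simpl; intros HC; auto.
  - split; [apply IH1; eapply Cond_l; eauto | apply IH2; eapply Cond_r; eauto].
  - pose proof (Cond_d HC) as HC'. split; [apply IH; auto|].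
    destruct (classic (exists p, tval g p None)) as [[p Hp]|Hn].
    + right. exists p. destruct HC' as [HL HD]. apply leaf_PL.
      * eapply HL; eauto.
      * intros q Hq Hv. apply (HD q p None Hq). auto.
    + left. apply notval_NV. intros p Hp. apply Hn. eauto.
Qed.

Lemma cond_good (i : spimp Rel) : cond6p1 i -> Good (snd i) /\ NV (snd i).
Proof.
  intros [_ [[w1 [w2 Hw]] [HL HD]]].
  split.
  - apply Cond_Good. split; auto.
  - apply notval_NV. intros p Hp.
    assert (x : nr (snd i)).
    { destruct w1 as [x|]; [exact x|]. destruct w2 as [x|]; [exact x|]. exfalso; auto. }
    destruct (@root_succ (snd i) x) as [r [v Hv]]. exact (HL p None Hp r v Hv).
Qed.

Lemma FA_valid (A : SLO Rel) (i : spimp Rel) :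
  cond6p1 i -> slo_valid A i -> frame_valid (FA A) i.
Proof.
  intros Hc HA V w Hw.
  destruct (cond_good Hc) as [HG HN].
  destruct Hc as [Hocc _].
  destruct (@extract Rel A V (fst i) w Hw) as [a [L HV]].
  apply (@main_lemma Rel A V a (snd i) HG).
  - intros p Hp. apply HV. apply Hocc. exact Hp.
  - exact HN.
  - eapply le_trans; [exact L|]. apply HA.
Qed.

Section Cplx.
Variable F : frame Rel.

Definition cplx : SLO Rel.
Proof.
  refine {| car := world F -> Prop;
            meet := fun X Y w => X w /\ Y w;
            top := fun _ => True;
            dia := fun r X w => exists v, facc F r w v /\ X v |}.
  - intros x y z. apply functional_extensionality; intro w.
    apply propositional_extensionality. tauto.
  - intros x y. apply functional_extensionality; intro w.
    apply propositional_extensionality. tauto.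
  - intros x. apply functional_extensionality; intro w.
    apply propositional_extensionality. tauto.
  - intros x. apply functional_extensionality; intro w.
    apply propositional_extensionality. tauto.
  - intros r x y H. apply functional_extensionality; intro w.
    apply propositional_extensionality. split; [tauto|].
    intros [v [H1 H2]]. split; [eauto|]. exists v. split; auto.
    rewrite <- H in H2. destruct H2; auto.
Defined.

Lemma cplx_eval (a : nat -> world F -> Prop) f w :
  sevl cplx a f w <-> ktrue F a f w.
Proof.
  revert w; induction f as [q| |f1 IH1 f2 IH2|r0 g IH]; simpl; intros w.
  - tauto.
  - tauto.
  - rewrite IH1, IH2. tauto.
  - split; intros [v [H1 H2]]; exists v; split; auto; apply IH; auto.
Qed.

Lemma frame_cplx i : frame_valid F i <-> slo_valid cplx i.
Proof.
  split.
  - intros H a. unfold sle. apply functional_extensionality; intro w.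
    apply propositional_extensionality. simpl. split; [tauto|].
    intros Hs. split; auto. apply cplx_eval. apply H. apply cplx_eval. auto.
  - intros H V w Hw. specialize (H V). unfold sle in H.
    apply cplx_eval. apply cplx_eval in Hw.
    assert (E := f_equal (fun X => X w) H). simpl in E. rewrite <- E in Hw. tauto.
Qed.
End Cplx.

Lemma sound (Sigma : spimp Rel -> Prop) (F : frame Rel) i :
  (forall j, Sigma j -> frame_valid F j) -> cons_SLO Sigma i -> frame_valid F i.
Proof.
  intros HF H. apply frame_cplx. apply H. intros j Hj. apply frame_cplx. auto.
Qed.

Lemma FA_embeds (A : SLO Rel) : embeds_into_complex A (FA A).
Proof.
  exists (fun x (w : A) => sle A w x). split; [|split; [|split]].
  - intros x y H. apply le_antisym.
    + apply H. apply le_refl.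
    + apply H. apply le_refl.
  - intros x y w. split.
    + intros H. split; (eapply le_trans; [exact H|]); [apply meet_l|apply meet_r].
    + intros [H1 H2]. apply meet_glb; auto.
  - intros w. split; auto. intros _. apply le_top.
  - intros r x w. simpl. split.
    + intros H. exists x. split; auto. apply le_refl.
    + intros [v [H1 H2]]. eapply le_trans; [exact H1|]. apply dia_mono. exact H2.
Qed.

Lemma embed_eval (A : SLO Rel) (F : frame Rel) (f : A -> world F -> Prop)
  (Hm : forall x y w, f (meet A x y) w <-> (f x w /\ f y w))
  (Ht : forall w, f (top A) w <-> True)
  (Hd : forall r x w, f (dia A r x) w <-> exists v, facc F r w v /\ f x v)
  (a : nat -> A) phi : forall w, f (sevl A a phi) w <-> ktrue F (fun p => f (a p)) phi w.
Proof.
  induction phi as [q| |f1 IH1 f2 IH2|r0 g IH]; simpl; intros w.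
  - tauto.
  - apply Ht.
  - rewrite Hm, IH1, IH2. tauto.
  - rewrite Hd. split; intros [v [H1 H2]]; exists v; split; auto; apply IH; auto.
Qed.

End Tree.

Theorem theorem6p1 (Rel : Type) (HRel : inhabited Rel)
    (Sigma : spimp Rel -> Prop)
    (Hcond : forall i, Sigma i -> cond6p1 i) :
  complex (spi_logic Sigma) /\ spi_complete Sigma.
Proof.
  assert (Hcx : complex (spi_logic Sigma)).
  { intros A HA. exists (FA A). split; [|apply FA_embeds].
    intros i Hi. apply (sound (Sigma := Sigma)); [|exact Hi].
    intros j Hj. apply FA_valid; auto. apply HA. intros B HB. auto. }
  split; [exact Hcx|].
  intros i. split.
  - intros HK A HA.
    destruct (Hcx A) as [F [HF [f [Hinj [Hm [Ht Hd]]]]]].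
    { intros j Hj. apply Hj. exact HA. }
    assert (HFi : frame_valid F i).
    { apply HK. intros j Hj. apply HF. intros B HB. auto. }
    intros a. apply Hinj. intros w. rewrite Hm. split; [tauto|].
    intros H. split; auto.
    apply (@embed_eval Rel A F f Hm Ht Hd). apply HFi. apply (@embed_eval Rel A F f Hm Ht Hd). exact H.
  - intros H F HF. apply (sound (Sigma := Sigma)); auto.
Qed.
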